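(* Fix integers $k \ge 3$ and $i \in \{2,\dots,k-1\}$, and let $T = \{1,\dots,k\}\setminus\{i\} \subset \mathbb{Z}$. There is a function $f : \mathbb{Z} \to \{0,\dots,k-2\}$ such that for each $x \in \mathbb{Z}$, $\sum_{y \in T} f(x-y) \equiv 1 \pmod{k-1}$. *)

(* Defs.v *)
From Stdlib Require Import ZArith List.
Open Scope Z_scope.

Definition T_set (k i : Z) : list Z :=
  List.filter (fun y => negb (Z.eqb y i)) (List.map Z.of_nat (List.seq 1 (Z.to_nat k))).

Definition sum_over_T (k i : Z) (f : Z -> Z) (x : Z) : Z :=
  List.fold_right (fun y acc => f (x - y) + acc) 0 (T_set k i).

(* Main.v *)
Require Import Defs.
From Stdlib Require Import ZArith List Lia.
Open Scope Z_scope.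

Definition sumL (g : Z -> Z) (l : list Z) : Z :=
  fold_right (fun y acc => g y + acc) 0 l.

Lemma sum_ext g h l : (forall y, In y l -> g y = h y) -> sumL g l = sumL h l.
Proof.
  induction l as [|a l IH]; simpl; intros H; auto.
  rewrite H by auto. rewrite IH; auto.
Qed.

Lemma sum_split a g l : sumL g l =
  sumL (fun y => if Z.eqb y a then g a else 0) l + sumL (fun y => if Z.eqb y a then 0 else g y) l.
Proof.
  induction l as [|b l IH]; simpl; auto.
  destruct (Z.eqb_spec b a); subst; lia.
Qed.

Lemma sum_filter p h l : sumL h (filter p l) = sumL (fun y => if p y then h y else 0) l.
Proof.
  induction l as [|b l IH]; simpl; auto.
  destruct (p b); simpl; lia.
Qed.

Lemma sum_seq a c s len :
  sumL (fun y => if Z.eqb y a then c else 0) (map Z.of_nat (seq s len)) =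
  if (Z.leb (Z.of_nat s) a && Z.ltb a (Z.of_nat s + Z.of_nat len))%bool then c else 0.
Proof.
  revert s; induction len as [|len IH]; intros s; simpl.
  - destruct (Z.leb_spec (Z.of_nat s) a), (Z.ltb_spec a (Z.of_nat s + 0)); simpl; lia.
  - rewrite IH. change (Z.pos (Pos.of_succ_nat len)) with (Z.of_nat (S len)). destruct (Z.eqb_spec (Z.of_nat s) a);
    destruct (Z.leb_spec (Z.of_nat s) a), (Z.ltb_spec a (Z.of_nat s + Z.of_nat (S len)));
    destruct (Z.leb_spec (Z.of_nat (S s)) a), (Z.ltb_spec a (Z.of_nat (S s) + Z.of_nat len));
    simpl; lia.
Qed.

Lemma sum_single k i a c : 1 <= a <= k -> a <> i ->
  sumL (fun y => if Z.eqb y a then c else 0) (T_set k i) = c.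
Proof.
  intros Ha Hai. unfold T_set. rewrite sum_filter.
  rewrite (sum_ext _ (fun y => if Z.eqb y a then c else 0)).
  - rewrite sum_seq. rewrite Z2Nat.id by lia.
    destruct (Z.leb_spec (Z.of_nat 1) a), (Z.ltb_spec a (Z.of_nat 1 + k)); simpl; lia.
  - intros y _. destruct (Z.eqb_spec y a), (Z.eqb_spec y i); simpl; subst; try lia; auto.
Qed.

Lemma In_T k i y : In y (T_set k i) -> 1 <= y <= k /\ y <> i.
Proof.
  unfold T_set. rewrite filter_In, in_map_iff. intros [[n [Hn Hs]] Hy].
  apply in_seq in Hs. destruct (Z.eqb_spec y i); simpl in Hy; try discriminate. lia.
Qed.

Fixpoint F (k i : Z) (fu : nat) (x : Z) : Z :=
  match fu with
  | O => 0
  | S fu =>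
    if (Z.leb (-(k-1)) x && Z.ltb x 0)%bool then 0
    else if Z.leb 0 x then
      (1 - sumL (fun y => if Z.eqb y 1 then 0 else F k i fu (x+1-y)) (T_set k i)) mod (k-1)
    else
      (1 - sumL (fun y => if Z.eqb y k then 0 else F k i fu (x+k-y)) (T_set k i)) mod (k-1)
  end.

Definition mu (k x : Z) : nat :=
  if Z.leb 0 x then Z.to_nat (x+1) else if Z.ltb x (-(k-1)) then Z.to_nat (-(k-1) - x) else O.

Lemma F_stable k i (hk : 3 <= k) : forall fu x fu', (mu k x < fu)%nat -> (fu <= fu')%nat ->
  F k i fu' x = F k i fu x.
Proof.
  induction fu as [|fu IH]; intros x fu' H1 H2; [lia|].
  destruct fu' as [|fu']; [lia|]. simpl.
  destruct (Z.leb_spec (-(k-1)) x), (Z.ltb_spec x 0); simpl; auto.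
  - destruct (Z.leb_spec 0 x); [|lia]. apply (f_equal (fun t => (1 - t) mod (k-1))). apply sum_ext.
    intros y Hy. apply In_T in Hy. destruct (Z.eqb_spec y 1); auto.
    apply IH; [|lia]. unfold mu in *.
    destruct (Z.leb_spec 0 x); [|lia].
    destruct (Z.leb_spec 0 (x+1-y)); [lia|]. destruct (Z.ltb_spec (x+1-y) (-(k-1))); lia.
  - destruct (Z.leb_spec 0 x); [lia|]. apply (f_equal (fun t => (1 - t) mod (k-1))). apply sum_ext.
    intros y Hy. apply In_T in Hy. destruct (Z.eqb_spec y k); auto.
    apply IH; [|lia]. unfold mu in *.
    destruct (Z.leb_spec 0 x); [lia|]. destruct (Z.ltb_spec x (-(k-1))); [|lia].
    destruct (Z.leb_spec 0 (x+k-y)); [lia|]. destruct (Z.ltb_spec (x+k-y) (-(k-1))); lia.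
  - destruct (Z.leb_spec 0 x); [lia|]. apply (f_equal (fun t => (1 - t) mod (k-1))). apply sum_ext.
    intros y Hy. apply In_T in Hy. destruct (Z.eqb_spec y k); auto.
    apply IH; [|lia]. unfold mu in *.
    destruct (Z.leb_spec 0 x); [lia|]. destruct (Z.ltb_spec x (-(k-1))); [|lia].
    destruct (Z.leb_spec 0 (x+k-y)); [lia|]. destruct (Z.ltb_spec (x+k-y) (-(k-1))); lia.
Qed.

Theorem proposition8 (k i : Z) (hk : 3 <= k) (hi1 : 2 <= i) (hi2 : i <= k - 1) :
  exists f : Z -> Z,
    (forall x : Z, 0 <= f x <= k - 2) /\
    (forall x : Z, (k - 1 | sum_over_T k i f x - 1)%Z).
Proof.
  set (f := fun x => F k i (S (mu k x)) x).
  exists f. split.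
  - intros x. unfold f. simpl.
    destruct ((Z.leb (-(k-1)) x && Z.ltb x 0)%bool); [lia|].
    destruct (Z.leb 0 x).
    + match goal with |- context [?a mod (k-1)] => pose proof (Z.mod_pos_bound a (k-1)) end; lia.
    + match goal with |- context [?a mod (k-1)] => pose proof (Z.mod_pos_bound a (k-1)) end; lia.
  - intros x. change (sum_over_T k i f x) with (sumL (fun y => f (x - y)) (T_set k i)).
    destruct (Z.leb_spec 1 x).
    + rewrite (sum_split 1). rewrite sum_single by lia.
      set (R := sumL _ _).
      assert (Hf : f (x-1) = (1 - R) mod (k-1)).
      { unfold f. simpl.
        destruct (Z.leb_spec (-(k-1)) (x-1)), (Z.ltb_spec (x-1) 0); simpl; try lia;
        (destruct (Z.leb_spec 0 (x-1)); [|lia]);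
        apply (f_equal (fun t => (1 - t) mod (k-1))); unfold R; apply sum_ext; intros y Hy; apply In_T in Hy;
        destruct (Z.eqb_spec y 1); auto; unfold f;
        replace (x - y) with (x-1+1-y) by ring;
        apply F_stable; auto; unfold mu;
        destruct (Z.leb_spec 0 (x-1)); try lia;
        destruct (Z.leb_spec 0 (x-1+1-y)); try lia;
        destruct (Z.ltb_spec (x-1+1-y) (-(k-1))); lia. }
      rewrite Hf. rewrite Z.mod_eq by lia.
      exists (- ((1-R) / (k-1))). ring.
    + rewrite (sum_split k). rewrite sum_single by lia.
      set (R := sumL _ _).
      assert (Hf : f (x-k) = (1 - R) mod (k-1)).
      { unfold f. simpl.
        destruct (Z.leb_spec (-(k-1)) (x-k)); [lia|]. simpl.
        destruct (Z.leb_spec 0 (x-k)); [lia|].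
        apply (f_equal (fun t => (1 - t) mod (k-1))); unfold R; apply sum_ext; intros y Hy; apply In_T in Hy;
        destruct (Z.eqb_spec y k); auto; unfold f;
        replace (x - y) with (x-k+k-y) by ring;
        apply F_stable; auto; unfold mu;
        destruct (Z.leb_spec 0 (x-k)); try lia;
        destruct (Z.ltb_spec (x-k) (-(k-1))); try lia;
        destruct (Z.leb_spec 0 (x-k+k-y)); try lia;
        destruct (Z.ltb_spec (x-k+k-y) (-(k-1))); lia. }
      rewrite Hf. rewrite Z.mod_eq by lia.
      exists (- ((1-R) / (k-1))). ring.
Qed.
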